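(* Let $r\geqslant 1$ and $n\geqslant 2r$. There exists $\pi\in\mathrm{Sym}_n$ with $w_H(\pi)=2r$ all of whose non-trivial cycles have length $2$ or $3$, such that $I(n,2r,r)=|B_r(\pi)\cap B_r(I_n)|$.
   Context: $\mathrm{Sym}_n$ is the symmetric group on $[n]$, $I_n$ is the identity, $d$ is the Hamming distance $d(\pi,\tau)=|\{i:\pi(i)\neq\tau(i)\}|$, $w_H(\pi)=d(I_n,\pi)$, and $B_r(\pi)=\{\sigma:d(\sigma,\pi)\leqslant r\}$. $I(n,d,r)=\max_{\pi,\tau,\ d(\pi,\tau)=d}|B_r(\pi)\cap B_r(\tau)|$. *)

(* Defs.v *)
From mathcomp Require Import all_boot all_order all_fingroup.
Set Implicit Arguments. Unset Strict Implicit. Unset Printing Implicit Defensive.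

Definition hdist (n : nat) (p t : {perm 'I_n}) : nat := #|[set i | p i != t i]|.

Definition wH (n : nat) (p : {perm 'I_n}) : nat := hdist 1 p.

Definition ball (n : nat) (p : {perm 'I_n}) (r : nat) : {set {perm 'I_n}} :=
  [set s | hdist s p <= r].

Definition Inter (n d r : nat) : nat :=
  \max_(p : {perm 'I_n}) \max_(t : {perm 'I_n} | hdist p t == d)
     #|ball p r :&: ball t r|.

(* Main.v *)
Require Import Defs.
From mathcomp Require Import all_boot all_order all_fingroup zify.
Set Implicit Arguments. Unset Strict Implicit. Unset Printing Implicit Defensive.

Section Refine.
Local Open Scope group_scope.
Variable T : finType.
Implicit Types (q p : {perm T}) (X : {set T}).

Definition qclosed q X := forall i, i \in X -> q i \in X.

Lemma porbit_le q z m : 0 < m -> (q ^+ m) z = z -> #|porbit q z| <= m.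
Proof.
move=> m0 hm.
have sub : porbit q z \subset [set (q ^+ (val i)) z | i : 'I_m].
  apply/subsetP => y /porbitP [j ->].
  have [i Hi]: exists i : 'I_m, (q ^+ j) z = (q ^+ i) z.
    elim: j => [|j [i Hi]]; first by exists (Ordinal m0).
    rewrite expgSr permM Hi -permM -expgSr.
    case: (ltnP i.+1 m) => h; first by exists (Ordinal h).
    exists (Ordinal m0) => /=.
    have -> : i.+1 = m by have := ltn_ord i; lia.
    by rewrite hm expg0 perm1.
  by rewrite Hi; apply: imset_f.
apply: leq_trans (subset_leq_card sub) _.
by apply: leq_trans (leq_imset_card _ _) _; rewrite card_ord.
Qed.

Lemma card_porbit_ge2 q z : q z != z -> 2 <= #|porbit q z|.
Proof.
move=> h.
have <- : #|[set z; q z]| = 2 by rewrite cards2 eq_sym h.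
apply: subset_leq_card; apply/subsetP => y; rewrite !inE => /orP[]/eqP->.
  exact: porbit_id.
by have := mem_porbit q 1 z; rewrite expg1.
Qed.

Lemma qclosed_pre q X w : qclosed q X -> q w \in X -> w \in X.
Proof.
move=> H hw.
have sub: q @: X \subset X by apply/subsetP => y /imsetP [x hx ->]; apply: H.
have eq: q @: X = X.
  by apply/eqP; rewrite eqEcard sub card_imset //=; exact: perm_inj.
by rewrite -eq in hw; rewrite -(mem_imset _ _ (@perm_inj _ q)).
Qed.

Lemma refine_aux k : forall q, #|T| - #|porbits q| < k ->
  exists p, [/\ (forall i, (p i != i) = (q i != i)),
     (forall X, qclosed q X -> qclosed p X) &
     (forall x, p x != x -> #|porbit p x| = 2 \/ #|porbit p x| = 3)].
Proof.
elim: k => [//|k IH] q hk.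
case: (boolP [exists z, (q z != z) && (3 < #|porbit q z|)]) =>
  [/existsP [z /andP [hz hc]] | hno].
- set y := q (q z).
  set q' := tperm y z * q.
  have q2 : y != z.
    apply/negP => /eqP e; have := @porbit_le q z 2 isT.
    by rewrite expgSr expg1 permM -/y e => /(_ erefl); rewrite leqNgt ltnW.
  have q3 : q y != z.
    apply/negP => /eqP e; have := @porbit_le q z 3 isT.
    by rewrite expgSr (expgSr _ 1) expg1 !permM -/y e => /(_ erefl); rewrite leqNgt hc.
  have hq'y : q' y = q z by rewrite permM tpermL.
  have hq'z : q' z = q y by rewrite permM tpermR.
  have hq'o i : i != y -> i != z -> q' i = q i.
    by move=> h1 h2; rewrite permM tpermD // eq_sym.
  have hcard : #|porbits q'| = #|porbits q| + 1.
    have := porbits_mul_tperm q y z.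
    have -> : y \in porbit q z by have := mem_porbit q 2 z; rewrite expgSr expg1 permM.
    by rewrite q2 /= addn0.
  have hb : #|porbits q'| <= #|T| by exact: leq_imset_card.
  have [p [hs hcl h23]] : exists p, [/\ (forall i, (p i != i) = (q' i != i)),
     (forall X, qclosed q' X -> qclosed p X) &
     (forall x, p x != x -> #|porbit p x| = 2 \/ #|porbit p x| = 3)].
    by apply: IH; lia.
  exists p; split => //.
  + move=> i; rewrite hs.
    case: (eqVneq i y) => [->|hy].
      rewrite hq'y /y !(inj_eq perm_inj).
      by rewrite eq_sym.
    case: (eqVneq i z) => [->|hz'].
      by rewrite hq'z q3 hz.
    by rewrite hq'o.
  + move=> X hX; apply: hcl => i hi.
    case: (eqVneq i y) => [e|hy].
      rewrite e hq'y; apply: (qclosed_pre hX); rewrite -/y -e //.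
    case: (eqVneq i z) => [e|hz'].
      by rewrite e hq'z /y; do 3! apply: (hX); rewrite -e.
    by rewrite hq'o //; apply: hX.
- exists q; split => // x hx.
  have := card_porbit_ge2 hx.
  move/existsPn: hno => /(_ x); rewrite hx /= -leqNgt.
  lia.
Qed.

Lemma refine q : exists p, [/\ (forall i, (p i != i) = (q i != i)),
     (forall X, qclosed q X -> qclosed p X) &
     (forall x, p x != x -> #|porbit p x| = 2 \/ #|porbit p x| = 3)].
Proof. exact: (@refine_aux (#|T| - #|porbits q|).+1). Qed.

End Refine.

Section Main.
Variable n : nat.
Implicit Types (q p s t : {perm 'I_n}) (X : {set 'I_n}).

Definition supp s := [set i | s i != i].

Lemma hdistC p t : hdist p t = hdist t p.
Proof. by apply: eq_card => i; rewrite !inE eq_sym. Qed.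

Lemma hdist_mulr s v u : hdist (s * u)%g (v * u)%g = hdist s v.
Proof. by apply: eq_card => i; rewrite !inE !permM (inj_eq perm_inj). Qed.

Lemma hdist1 s : hdist s 1 = #|supp s|.
Proof. by apply: eq_card => i; rewrite !inE perm1. Qed.

Lemma inter_char q s r : #|supp q| = 2 * r -> s \in ball q r :&: ball 1 r ->
  (forall i, s i = i \/ s i = q i) /\ #|supp s| = r.
Proof.
move=> hq /setIP [hA hB]; move: hA hB; rewrite !inE hdist1 => hA hB.
set A := [set i | s i != q i].
have hA' : #|A| <= r by [].
have sub : supp q \subset A :|: supp s.
  apply/subsetP => i; rewrite !inE => hi; apply/orP.
  case: (eqVneq (s i) (q i)) => [e|e]; [right; rewrite e // | by left].
have := subset_leq_card sub; rewrite cardsU hq.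
have := subset_leq_card (subsetIl A (supp s)).
move=> h1 h2.
have h0 : #|A :&: supp s| = 0 by lia.
split; last by lia.
move=> i; move/cards0_eq/setP: h0 => /(_ i); rewrite !inE.
by case: (eqVneq (s i) (q i)) => [->|]; [right| case: (eqVneq (s i) i); [left|]].
Qed.

Definition restr p X : {perm 'I_n} :=
  insubd (1%g : {perm 'I_n}) [ffun i => if i \in X then p i else i].

Lemma restrE p X : qclosed p X -> forall i, restr p X i = if i \in X then p i else i.
Proof.
move=> hX i.
have inj : injectiveb [ffun i => if i \in X then p i else i].
  apply/injectiveP => a b; rewrite !ffunE.
  case: ifP => ha; case: ifP => hb.
  - exact: perm_inj.
  - by move=> e; move: (hX a ha); rewrite e hb.
  - by move=> e; move: (hX b hb); rewrite -e ha.
  - by [].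
by rewrite /restr -pvalE insubdK // ffunE.
Qed.

Lemma core q p r : #|supp q| = 2 * r -> (forall i, (p i != i) = (q i != i)) ->
  (forall X, qclosed q X -> qclosed p X) ->
  #|ball q r :&: ball 1 r| <= #|ball p r :&: ball 1 r|.
Proof.
move=> hq hs hcl.
set D := ball q r :&: ball 1 r.
have suppE : supp p = supp q by apply/setP => i; rewrite !inE hs.
have key : forall s, s \in D -> qclosed p (supp s).
  move=> s sD; apply: hcl => i; rewrite !inE => hi.
  have [hc _] := inter_char hq sD.
  have e : s i = q i by case: (hc i) => // e; rewrite e eqxx in hi.
  apply/negP => /eqP e2.
  have e3 : q i = i by apply: (@perm_inj _ s); rewrite e2 e.
  by move: hi; rewrite e e3 eqxx.
have Fsupp : forall s, s \in D -> supp (restr p (supp s)) = supp s.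
  move=> s sD; apply/setP => i; rewrite inE (restrE (key s sD)) inE.
  case: ifP => hi; last by rewrite eqxx.
  have [hc _] := inter_char hq sD.
  rewrite hs; case: (hc i) => e; last by rewrite -e.
  by rewrite e eqxx in hi.
have Fin : forall s, s \in D -> restr p (supp s) \in ball p r :&: ball 1 r.
  move=> s sD; have [hc hr] := inter_char hq sD.
  rewrite !inE hdist1 Fsupp // hr leqnn andbT.
  apply: leq_trans (_ : #|supp p :\: supp s| <= _).
    apply: subset_leq_card; apply/subsetP => i; rewrite !inE (restrE (key s sD)) inE.
    case: ifP => hi; first by rewrite eqxx.
    by move=> h; rewrite eq_sym h.
  have := cardsID (supp s) (supp p).
  have -> : supp p :&: supp s = supp s.
    apply/setIidPr; rewrite suppE; apply/subsetP => i; rewrite !inE => h.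
    by case: (hc i) => e; rewrite e in h; [rewrite eqxx in h|].
  by rewrite suppE hq hr; lia.
have Finj : {in D &, injective (fun s => restr p (supp s))}.
  move=> s1 s2 h1 h2 /= e.
  have := Fsupp s1 h1; rewrite e Fsupp // => es.
  apply/permP => i.
  have [c1 _] := inter_char hq h1; have [c2 _] := inter_char hq h2.
  move/setP: es => /(_ i); rewrite !inE.
  move=> h; case: (c1 i) => e1; case: (c2 i) => e2; rewrite e1 e2 // in h *;
    rewrite eqxx in h; move: h; case: (eqVneq (q i) i) => //.
rewrite -(card_in_imset Finj).
by apply: subset_leq_card; apply/subsetP => _ /imsetP [s sD ->]; exact: Fin.
Qed.

End Main.

Lemma exists_w r n : 2 * r <= n -> exists q : {perm 'I_n}, #|supp q| = 2 * r.
Proof.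
move=> hn.
pose fs i := if i < 2 * r then (if i %% 2 == 1 then i.-1 else i.+1) else i.
have fs_lt : forall i, i < n -> fs i < n.
  move=> i hi; rewrite /fs; case: ifP => h1; [case: ifP => h2|]; lia.
have fsK : forall i, fs (fs i) = i.
  move=> i; rewrite /fs; case: (ltnP i (2*r)) => h1; [case: (eqVneq (i %% 2) 1) => h2|];
    rewrite ?h1 ?h2 /=; repeat case: ifP; lia.
have fsn : forall i, (fs i != i) = (i < 2 * r).
  move=> i; rewrite /fs; case: ifP => h1; [case: ifP => h2|]; lia.
pose f (i : 'I_n) : 'I_n := Ordinal (fs_lt i (ltn_ord i)).
have fK : cancel f f by move=> i; apply: val_inj; rewrite /= fsK.
exists (perm (can_inj fK)).
have -> : supp (perm (can_inj fK)) = widen_ord hn @: [set: 'I_(2 * r)].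
  apply/setP => i; rewrite inE permE -(inj_eq val_inj) /= fsn.
  apply/idP/imsetP => [h|[j _ ->]]; last by rewrite /= ltn_ord.
  by exists (Ordinal h); rewrite ?inE //; apply: val_inj.
by rewrite card_imset ?cardsT ?card_ord //; by move=> a b /(congr1 val) /= e; apply: val_inj.
Qed.

Theorem lemma9 (r n : nat) (hr : 1 <= r) (hn : 2 * r <= n) :
  exists p : {perm 'I_n},
    [/\ wH p = 2 * r,
        (forall x : 'I_n, p x != x -> #|porbit p x| = 2 \/ #|porbit p x| = 3)
      & Inter n (2 * r) r = #|ball p r :&: ball 1 r| ].
Proof.
have wHE : forall p : {perm 'I_n}, wH p = #|supp p|.
  by move=> p; rewrite /wH hdistC hdist1.
pose G := fun p : {perm 'I_n} => (wH p == 2 * r) &&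
  [forall x, (p x != x) ==> ((#|porbit p x| == 2) || (#|porbit p x| == 3))].
have GP : forall q : {perm 'I_n}, #|supp q| = 2 * r ->
    exists2 p, G p & #|ball q r :&: ball 1 r| <= #|ball p r :&: ball 1 r|.
  move=> q hq; have [p [hs hcl h23]] := refine q.
  exists p; last exact: core hq hs hcl.
  apply/andP; split.
    rewrite wHE; have ->: supp p = supp q by apply/setP => i; rewrite !inE hs.
    by rewrite hq.
  apply/forallP => x; apply/implyP => hx.
  by case: (h23 x hx) => ->; rewrite eqxx ?orbT.
have [q0 hq0] := exists_w hn.
have [p0 Gp0 _] := GP q0 hq0.
case: (arg_maxnP (fun p => #|ball p r :&: ball 1 r|) Gp0) => ps Gps hmax.
exists ps; move/andP: Gps => [/eqP hw /forallP h23].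
split => //.
  by move=> x hx; move: (h23 x); rewrite hx /= => /orP [] /eqP ->; [left|right].
apply/eqP; rewrite eqn_leq; apply/andP; split.
- apply/bigmax_leqP => q _; apply/bigmax_leqP => t /eqP hqt.
  set q' := (q * t^-1)%g.
  have hq' : #|supp q'| = 2 * r.
    by rewrite -hdist1 -(mulgV t) hdist_mulr.
  have [p Gp hle] := GP q' hq'.
  apply: leq_trans (hmax p Gp).
  apply: leq_trans hle.
  rewrite -(card_imset _ (mulIg t^-1%g)).
  apply: subset_leq_card; apply/subsetP => _ /imsetP [s hs ->].
  move: hs; rewrite !inE -(mulgV t) !hdist_mulr.
  by [].
- apply: (leq_trans _ (leq_bigmax ps)) => /=.
  apply: leq_bigmax_cond.
  by rewrite hdist1 -wHE hw.
Qed.
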